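(* Let $\mathcal{E}$ be a Banach space of analytic functions on an annulus $\{r<|z|<R\}$ (with $0\le r<R\le\infty$) such that all evaluation functionals are continuous, and suppose $k_n\ne0$ for all $n\in\mathbb{Z}$. If $w=(w_n)_{n\in\mathbb{Z}}$ is a complex sequence such that $B_w$ is a bounded operator on $\mathcal{E}$, then $$\sup_{n\in\mathbb{Z}}\ |w_{n+1}|\frac{\|k_{n+1}\|}{\|k_n\|}<\infty.$$
   Context: For $f\in\mathcal{E}$ with Laurent expansion $f(z)=\sum_{n\in\mathbb{Z}}\widehat f(n)z^n$, $k_n(f)=\widehat f(n)$ is the $n$-th coefficient functional (a continuous linear functional on $\mathcal{E}$), and $\|k_n\|$ is its norm in $\mathcal{E}^*$. $B_w$ acts by $B_w(\sum_n\widehat f(n)z^n)=\sum_nw_n\widehat f(n)z^{n-1}$. *)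

(* Defs.v *)
From HB Require Import structures.
From mathcomp Require Import all_boot all_order all_algebra.
From mathcomp Require Import complex.
From mathcomp Require Import all_classical all_reals all_analysis.
Set Implicit Arguments. Unset Strict Implicit. Unset Printing Implicit Defensive.
Import Order.TTheory GRing.Theory Num.Theory ComplexField.
Import numFieldTopology.Exports numFieldNormedType.Exports.
Local Open Scope ring_scope.
Local Open Scope complex_scope.

(* We equip R[i] with its standard (norm) topology / normed-module structure
   over itself, exactly as MathComp-Analysis does for a generic numFieldType. *)
HB.instance Definition _ (R : rcfType) := GRing.ComAlgebra.copy R[i] R[i]^o.
HB.instance Definition _ (R : rcfType) := Vector.copy R[i] R[i]^o.
HB.instance Definition _ (R : rcfType) := NormedModule.copy R[i] R[i]^o.

Definition annulus (R : realType) (r : R) (Rb : \bar R) (z : R[i]) : Prop :=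
  (r%:C < `|z|) /\ (@Order.lt _ (\bar R) ((complex.Re `|z|)%:E) Rb).

Definition laurent_expansion (R : realType) (r : R) (Rb : \bar R)
    (g : R[i] -> R[i]) (c : int -> R[i]) : Prop :=
  forall z, annulus r Rb z ->
    let pos := fun n : nat => c (n%:Z) * z ^+ n in
    let neg := fun n : nat => c (- (n.+1%:Z)) * z ^- n.+1 in
    cvgn (series pos) /\ cvgn (series neg) /\
    g z = limn (series pos) + limn (series neg).

(* The Laurent coefficient sequence of g (0 if g has no Laurent expansion). *)
Definition laurent_coefs (R : realType) (r : R) (Rb : \bar R)
    (g : R[i] -> R[i]) : int -> R[i] :=
  match pselect (exists c, laurent_expansion r Rb g c) with
  | left h => proj1_sig (cid h)
  | right _ => fun _ => 0
  end.

(* n-th coefficient functional k_n(f) = \hat f(n). *)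
Definition coef_fun (R : realType) (r : R) (Rb : \bar R)
    (E : normedModType R[i]) (ev : E -> R[i] -> R[i]) (n : int) (f : E) : R[i] :=
  laurent_coefs r Rb (ev f) n.

Definition dual_norm (R : realType) (E : normedModType R[i]) (k : E -> R[i]) : R :=
  sup [set complex.Re (`|k f| / `|f|) | f in [set f : E | f != 0]].

(* Main.v *)
Require Import Defs.
From HB Require Import structures.
From mathcomp Require Import all_boot all_order all_algebra.
From mathcomp Require Import complex.
From mathcomp Require Import all_classical all_reals all_analysis.
Import Order.TTheory GRing.Theory Num.Theory ComplexField.
Import numFieldTopology.Exports numFieldNormedType.Exports.
Local Open Scope ring_scope.
Local Open Scope complex_scope.
Section S.
Variables (R : realType) (E : normedModType R[i]).

Lemma ge0E (z : R[i]) : 0 <= z -> z = (complex.Re z)%:C.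
Proof. by move=> h; rewrite RRe_real // ger0_real. Qed.

Lemma normCE (z : R[i]) : `|z| = (complex.Re `|z|)%:C.
Proof. by rewrite RRe_real // normr_real. Qed.

Lemma Re_norm_ge0 (z : R[i]) : 0 <= complex.Re `|z|.
Proof. by have := normr_ge0 z; rewrite lecE => /andP[]. Qed.

Lemma lin_bound (k : E -> R[i])
 (hk : forall (a : R[i]) (f g : E), k (a *: f + g) = a * k f + k g) :
 continuous k -> exists2 C : R, 0 < C & forall x, complex.Re `|k x| <= C * complex.Re `|x|.
Proof.
move=> kc.
pose kl : {linear E -> R[i]} := HB.pack k (GRing.isLinear.Build R[i] E R[i] *:%R k hk).
have := (linear_boundedP kl).1 (@continuous_linear_bounded _ E R[i] 0 kl (kc 0)).
move=> /pinfty_ex_gt0 [M M0 HM].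
have MR : M = (complex.Re M)%:C by rewrite RRe_real // gtr0_real.
exists (complex.Re M); first by rewrite -ltcR -MR.
move=> x; have := HM x; rewrite [`|kl x|]normCE [`|x|]ge0E // MR -rmorphM lecR //.
Qed.

Definition RN (x : E) : R := complex.Re `|x|.

Lemma RN_gt0 (x : E) : x != 0 -> 0 < RN x.
Proof. by rewrite -normr_gt0 ltcE => /andP[]. Qed.

Lemma RN_ge0 (x : E) : 0 <= RN x.
Proof. by have := normr_ge0 x; rewrite lecE => /andP[]. Qed.

Lemma Re_quot (k : E -> R[i]) (f : E) :
  complex.Re (`|k f| / `|f|) = complex.Re `|k f| / RN f.
Proof.
rewrite [`|k f|]normCE [`|f|]ge0E // -fmorphV -rmorphM //.
Qed.

Lemma dual_props (k : E -> R[i])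
 (hk : forall (a : R[i]) (f g : E), k (a *: f + g) = a * k f + k g) :
 continuous k ->
 0 <= dual_norm k /\ forall g, complex.Re `|k g| <= dual_norm k * RN g.
Proof.
move=> /(lin_bound k hk) [C C0 HC].
rewrite /dual_norm; set S := (X in sup X).
have ubS : ubound S C.
  move=> _ [f /= f0 <-]; rewrite Re_quot ler_pdivrMr ?RN_gt0 //.
have hS : has_ubound S by exists C.
have k0 : k 0 = 0.
  have h := hk 1 0 0; rewrite scaler0 addr0 mul1r in h.
  by apply: (@addrI _ (k 0)); rewrite addr0 -h.
have key : forall g, g != 0 -> complex.Re `|k g| <= dual_norm k * RN g.
  move=> g g0; rewrite -ler_pdivrMr ?RN_gt0 // -Re_quot.
  by apply: ub_le_sup => //; exists g.
split.
  have [[y Sy]|S0] := pselect (exists y, S y); last first.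
    have -> : S = set0 by apply/seteqP; split=> // y Sy; apply: S0; exists y.
    by rewrite sup0.
  case: Sy => g /= g0 _.
  apply: le_trans (ub_le_sup hS _); last by exists g.
  by rewrite Re_quot divr_ge0 // ?Re_norm_ge0 ?RN_ge0.
move=> g; have [->|g0] := eqVneq g 0; last exact: key.
by rewrite k0 normr0 /RN normr0 /= mulr0.
Qed.

Lemma op_bound (T : {linear E -> E}) :
 continuous T -> exists2 C : R, 0 < C & forall x, RN (T x) <= C * RN x.
Proof.
move=> kc.
have := (linear_boundedP T).1 (@continuous_linear_bounded _ E E 0 T (kc 0)).
move=> /pinfty_ex_gt0 [M M0 HM].
have MR : M = (complex.Re M)%:C by rewrite RRe_real // gtr0_real.
exists (complex.Re M); first by rewrite -ltcR -MR.
move=> x; have := HM x; rewrite [`|T x|]ge0E // [`|x|]ge0E // MR -rmorphM lecR //.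
Qed.

Lemma lin0 (k : E -> R[i])
 (hk : forall (a : R[i]) (f g : E), k (a *: f + g) = a * k f + k g) : k 0 = 0.
Proof.
have h := hk 1 0 0; rewrite scaler0 addr0 mul1r in h.
by apply: (@addrI _ (k 0)); rewrite addr0 -h.
Qed.

Lemma ReNM (x y : R[i]) : complex.Re `|x * y| = complex.Re `|x| * complex.Re `|y|.
Proof. by rewrite normrM [`|x|]normCE [`|y|]normCE -rmorphM. Qed.
End S.

Theorem proposition3p4 (R : realType) (r : R) (Rb : \bar R)
  (E : completeNormedModType R[i]) (ev : E -> R[i] -> R[i])
  (hr : 0 <= r) (hrR : (r%:E < Rb)%E)
  (* E is a space of functions on the annulus: pointwise linear structure *)
  (ev_lin : forall (a : R[i]) (f g : E) z, annulus r Rb z ->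
              ev (a *: f + g) z = a * ev f z + ev g z)
  (ev_inj : forall f g : E, (forall z, annulus r Rb z -> ev f z = ev g z) -> f = g)
  (* every element of E is analytic on the annulus (has a Laurent expansion) *)
  (ev_an : forall f : E, exists c, laurent_expansion r Rb (ev f) c)
  (* evaluation functionals are continuous *)
  (ev_cont : forall z, annulus r Rb z -> continuous (fun f : E => ev f z))
  (* k_n is a continuous linear functional (standing fact of the context) *)
  (k_lin : forall n (a : R[i]) (f g : E),
     coef_fun r Rb ev n (a *: f + g) = a * coef_fun r Rb ev n f + coef_fun r Rb ev n g)
  (k_cont : forall n, continuous (coef_fun r Rb ev n))
  (* k_n <> 0 for all n *)
  (k_nz : forall n : int, exists f : E, coef_fun r Rb ev n f != 0)
  (w : int -> R[i])
  (* B_w is a bounded operator on E *)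
  (Bw : {linear E -> E}) (Bw_cont : continuous Bw)
  (Bw_def : forall (f : E) (n : int),
     coef_fun r Rb ev n (Bw f) = w (n + 1) * coef_fun r Rb ev (n + 1) f) :
  exists M : R, forall n : int,
    complex.Re `|w (n + 1)| * dual_norm (coef_fun r Rb ev (n + 1))
      / dual_norm (coef_fun r Rb ev n) <= M.
Proof.
have [C C0 HC] := @op_bound _ _ Bw Bw_cont.
exists C => n.
set k0 := coef_fun r Rb ev n; set k1 := coef_fun r Rb ev (n + 1).
have [d0ge0 H0] := @dual_props _ _ _ (k_lin n) (k_cont n).
have [d1ge0 H1] := @dual_props _ _ _ (k_lin (n + 1)) (k_cont (n + 1)).
rewrite -/k0 -/k1 in d0ge0 H0 d1ge0 H1.
have [d0eq|d0pos] : dual_norm k0 = 0 \/ 0 < dual_norm k0.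
  by move: d0ge0; rewrite le_eqVlt => /orP[/eqP <-|->]; [left|right].
  by rewrite d0eq invr0 mulr0 ltW.
rewrite ler_pdivrMr //.
set a := complex.Re `|w (n + 1)|.
have : 0 <= a by exact: Re_norm_ge0.
rewrite le_eqVlt => /orP[/eqP a0|apos].
  by rewrite -a0 mul0r mulr_ge0 // ltW.
rewrite mulrC -ler_pdivlMr //.
rewrite {1}/dual_norm; apply: ge_sup.
  have [f kf] := k_nz (n + 1).
  have f0 : f != 0.
    by apply: contraNneq kf => ->; rewrite (@lin0 _ _ _ (k_lin (n + 1))).
  by exists (complex.Re (`|k1 f| / `|f|)), f.
move=> _ [f /= f0 <-]; rewrite Re_quot ler_pdivrMr ?RN_gt0 //.
rewrite mulrAC ler_pdivlMr // mulrC /a -ReNM /k1 -Bw_def -/k0.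
apply: le_trans (H0 _) _.
by rewrite [C * _]mulrC -mulrA ler_wpM2l.
Qed.
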